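(* For $k\in\mathbb{N}$ and $n=2^k-1$, for all $1\le j<n$, $$\bar\mu^{(k)}_{n,j}=(\rho^k-1)\big(c^{(k)}_j-\pi^{(k)}_j\big).$$ Consequently, for all $1\le j<n$, $$\mu^{(k+1)}_{n,j}=\frac{\rho^{2k-1}}{\rho^{k-1}+1}\big(c^{(k)}_j-\pi^{(k)}_j\big)\ge0 .$$
   Context: $\rho=1+\sqrt2$; $\alpha_t=\rho^{\nu(t+1)-1}+1$ ($\nu(i)$ the largest $j$ with $2^j\mid i$). For $k\in\mathbb{N}$, $n=2^k-1$, $\pi^{(k)}=[\alpha_0,\dots,\alpha_{n-1}]$, indexed $\pi^{(k)}_1,\dots,\pi^{(k)}_n$. Define $c^{(k)}\in\mathbb{R}^n$ (indexed $1,\dots,n$) by $c^{(1)}=[2(\rho-1)]$, $c^{(k+1)}=[\pi^{(k)},(1+\rho^{-k})(\rho^{k-1}+1),\rho c^{(k)}-(\rho-1-\rho^{-k})\pi^{(k)}]$. Multipliers $\mu^{(k)}_{i,j}$, $i\in\{1,\dots,n,*\}$, $j\in\{1,\dots,n\}$: $\mu^{(k)}_{i,j}=\bar\mu^{(k)}_{i,j}$ for $i\ne*$ and $\mu^{(k)}_{*,j}=c^{(k)}_j+\mathbf 1\{j=1\}$. $\bar\mu^{(1)}_{1,1}=0$. For $n=2^k-1$ and $1\le i,j\le 2n+1$, $\bar\mu^{(k+1)}_{i,j}$ is the sum of: $\bar\mu^{(k)}_{i,j}\mathbf 1\{1\le i,j\le n\}+\rho^2\bar\mu^{(k)}_{i-n-1,j-n-1}\mathbf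 1\{n+2\le i,j\le 2n+1\}$; $\rho^k\mathbf 1\{(i,j)=(n,n+1)\}+\rho^2\mathbf 1\{(i,j)=(n+1,n+2)\}+(\rho-\rho^{-k})(\rho^{k-1}+1)\mathbf 1\{(i,j)=(2n+1,n+1)\}$; and $\big(1-\frac{\rho^k}{\rho^{k-1}+1}\big)(c^{(k)}_j-\pi^{(k)}_j)\mathbf 1\{i=n,1\le j\le n\}+\frac{\rho^k}{\rho^{k-1}+1}(c^{(k)}_j-\pi^{(k)}_j)\mathbf 1\{i=n+1,1\le j\le n\}+\frac{\rho^k}{\rho^{k-1}+1}\pi^{(k)}_{j-n-1}\mathbf 1\{i=n,n+2\le j\le 2n+1\}+\frac{\rho}{\rho^{k-1}+1}\pi^{(k)}_{j-n-1}\mathbf 1\{i=n+1,n+2\le j\le2n+1\}+\big((\rho+1)c^{(k)}_{j-n-1}-(1+\rho^{-k})\pi^{(k)}_{j-n-1}\big)\mathbf 1\{i=2n+1,n+2\le j\le 2n+1\}$. *)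

(* Defs.v *)
(* concrete reals R. All vectors/matrices are 1-indexed
   functions on nat, equal to 0 outside their index range. *)
From Stdlib Require Import Reals Lra Lia Arith.
Open Scope bool_scope.
Open Scope R_scope.

Definition rho : R := 1 + sqrt 2.

(* nu i = largest j with 2^j | i (for i >= 1); computed with fuel i. *)
Fixpoint nu_aux (fuel i : nat) : nat :=
  match fuel with
  | O => O
  | S f => if ((0 <? i) && (i mod 2 =? 0))%nat then S (nu_aux f (i / 2)) else O
  end.
Definition nu (i : nat) : nat := nu_aux i i.

(* alpha_t = rho^(nu(t+1) - 1) + 1 (integer exponent, may be -1) *)
Definition alpha (t : nat) : R :=
  powerRZ rho (Z.of_nat (nu (t + 1)) - 1)%Z + 1.

Definition inrange (n j : nat) : bool := ((1 <=? j) && (j <=? n))%nat.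

Definition pi (k j : nat) : R :=
  if inrange (2 ^ k - 1) j then alpha (j - 1) else 0.

Definition c_step (k : nat) (ck : nat -> R) (j : nat) : R :=
  let n := (2 ^ k - 1)%nat in
  if inrange n j then pi k j
  else if (j =? n + 1)%nat then (1 + / rho ^ k) * (rho ^ (k - 1) + 1)
  else if inrange (2 * n + 1) j then
    rho * ck (j - n - 1)%nat - (rho - 1 - / rho ^ k) * pi k (j - n - 1)
  else 0.

Fixpoint c (k : nat) : nat -> R :=
  match k with
  | O => fun _ => 0
  | S O => fun j => if (j =? 1)%nat then 2 * (rho - 1) else 0
  | S ((S _) as k') => c_step k' (c k')
  end.

Definition ind (b : bool) : R := if b then 1 else 0.

Definition mubar_step (k : nat) (mk : nat -> nat -> R) (i j : nat) : R :=
  let n := (2 ^ k - 1)%nat in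
  let N := (2 * n + 1)%nat in
  let ck := c k in
  if (inrange N i && inrange N j)%bool then
      mk i j * ind (inrange n i && inrange n j)
    + rho ^ 2 * mk (i - n - 1)%nat (j - n - 1)%nat
        * ind ((n + 2 <=? i) && (i <=? N) && (n + 2 <=? j) && (j <=? N))%nat
    + rho ^ k * ind ((i =? n) && (j =? n + 1))%nat
    + rho ^ 2 * ind ((i =? n + 1) && (j =? n + 2))%nat
    + (rho - / rho ^ k) * (rho ^ (k - 1) + 1) * ind ((i =? N) && (j =? n + 1))%nat
    + (1 - rho ^ k / (rho ^ (k - 1) + 1)) * (ck j - pi k j)
        * ind ((i =? n)%nat && inrange n j)
    + rho ^ k / (rho ^ (k - 1) + 1) * (ck j - pi k j)
        * ind ((i =? n + 1)%nat && inrange n j)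
    + rho ^ k / (rho ^ (k - 1) + 1) * pi k (j - n - 1)%nat
        * ind ((i =? n) && (n + 2 <=? j) && (j <=? N))%nat
    + rho / (rho ^ (k - 1) + 1) * pi k (j - n - 1)%nat
        * ind ((i =? n + 1) && (n + 2 <=? j) && (j <=? N))%nat
    + ((rho + 1) * ck (j - n - 1)%nat - (1 + / rho ^ k) * pi k (j - n - 1)%nat)
        * ind ((i =? N) && (n + 2 <=? j) && (j <=? N))%nat
  else 0.

Fixpoint mubar (k : nat) : nat -> nat -> R :=
  match k with
  | O => fun _ _ => 0
  | S O => fun _ _ => 0
  | S ((S _) as k') => mubar_step k' (mubar k')
  end.

Inductive ridx := Star | Row (i : nat).

Definition mu (k : nat) (i : ridx) (j : nat) : R :=
  match i with
  | Row i' => mubar k i' j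
  | Star => if inrange (2 ^ k - 1) j then c k j + ind (j =? 1)%nat else 0
  end.

(* Main.v *)
Require Import Defs.
From Stdlib Require Import Reals Lra Lia.
Open Scope R_scope.

Ltac bsimpl := unfold Defs.ind, inrange; repeat match goal with
 | |- context [Nat.eqb ?a ?b] => first [ rewrite (proj2 (Nat.eqb_eq a b)) by lia | rewrite (proj2 (Nat.eqb_neq a b)) by lia ]
 | |- context [Nat.leb ?a ?b] => first [ rewrite (proj2 (Nat.leb_le a b)) by lia | rewrite (proj2 (Nat.leb_gt a b)) by lia ]
 end; cbn [andb]; unfold Defs.ind.

Lemma pow2_ge1 k : (1 <= 2^k)%nat.
Proof. induction k; simpl; lia. Qed.

Lemma pow2S k : (2^(S k) - 1 = 2*(2^k-1)+1)%nat.
Proof. pose proof (pow2_ge1 k). simpl. lia. Qed.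

Lemma row_N k n j mk : n = (2^k-1)%nat -> (1<=n)%nat ->
  mubar_step k mk (2*n+1) j =
  if inrange (2*n+1) j then
  (if (j <=? n)%nat then 0 else if (j =? n+1)%nat then (rho - /rho^k)*(rho^(k-1)+1)
   else rho^2 * mk n (j-n-1)%nat + ((rho+1)*c k (j-n-1)%nat - (1+/rho^k)*pi k (j-n-1)%nat))
  else 0.
Proof.
  intros Hn H1. unfold mubar_step. cbv zeta. rewrite <- Hn.
  replace (2*n+1-n-1)%nat with n by lia.
  destruct (inrange (2*n+1) j) eqn:E; [|now rewrite Bool.andb_false_r].
  unfold inrange in E. apply andb_prop in E as [E1 E2].
  apply Nat.leb_le in E1. apply Nat.leb_le in E2.
  destruct (Nat.leb_spec j n).
  - bsimpl. ring.
  - destruct (Nat.eqb_spec j (n+1)).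
    + bsimpl. ring.
    + bsimpl. ring.
Qed.

Lemma row_n k n j mk : n = (2^k-1)%nat -> (1<=n)%nat -> (1 <= j < n)%nat ->
  mubar_step k mk n j = mk n j + (1 - rho^k/(rho^(k-1)+1))*(c k j - pi k j).
Proof.
  intros Hn H1 Hj. unfold mubar_step. cbv zeta. rewrite <- Hn.
  bsimpl. ring.
Qed.

Lemma nu_aux_fuel : forall f g i, (i <= f)%nat -> (i <= g)%nat -> nu_aux f i = nu_aux g i.
Proof.
  induction f as [|f IH]; intros g i Hf Hg.
  - assert (i = 0%nat) by lia. subst. destruct g; reflexivity.
  - destruct g as [|g].
    + assert (i = 0%nat) by lia. subst. reflexivity.
    + cbn [nu_aux]. destruct (((0 <? i) && (i mod 2 =? 0))%nat) eqn:E; [|reflexivity].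
      f_equal. destruct i. { simpl. apply IH; lia. }
      assert (Nat.div (S i) 2 < S i)%nat by (apply Nat.div_lt; lia).
      apply IH; lia.
Qed.

Lemma nu_double m : (1 <= m)%nat -> nu (2*m) = S (nu m).
Proof.
  intros Hm. unfold nu. destruct (2*m)%nat eqn:E; [lia|].
  cbn [nu_aux]. rewrite <- E.
  replace ((0 <? 2*m) && ((2*m) mod 2 =? 0))%nat with true.
  2:{ symmetry. apply andb_true_intro. split. apply Nat.ltb_lt; lia.
      apply Nat.eqb_eq. rewrite Nat.mul_comm. apply Nat.Div0.mod_mul. }
  f_equal. rewrite Nat.mul_comm, Nat.div_mul by lia. apply nu_aux_fuel; lia.
Qed.

Lemma nu_odd m : nu (2*m+1) = 0%nat.
Proof.
  unfold nu. destruct (2*m+1)%nat eqn:E; [lia|]. cbn [nu_aux]. rewrite <- E.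
  replace ((2*m+1) mod 2)%nat with 1%nat.
  2:{ rewrite Nat.add_comm, Nat.mul_comm, Nat.Div0.mod_add. reflexivity. }
  rewrite Bool.andb_false_r. reflexivity.
Qed.

Lemma nu_pow k : nu (2^k) = k.
Proof.
  induction k. reflexivity.
  rewrite Nat.pow_succ_r'. rewrite nu_double by apply pow2_ge1. now f_equal.
Qed.

Lemma nu_shift : forall k j, (1 <= j < 2^k)%nat -> nu (2^k + j) = nu j.
Proof.
  induction k; intros j Hj. simpl in Hj; lia.
  rewrite Nat.pow_succ_r' in *.
  destruct (Nat.Even_or_Odd j) as [[m Hm]|[m Hm]]; subst j.
  - replace (2 * 2^k + 2*m)%nat with (2 * (2^k + m))%nat by lia.
    rewrite !nu_double by lia. f_equal. apply IHk. lia.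
  - replace (2 * 2^k + (2*m+1))%nat with (2 * (2^k + m) + 1)%nat by lia.
    rewrite !nu_odd. reflexivity.
Qed.

Lemma rho_pos : 0 < rho.
Proof. unfold rho. pose proof (sqrt_pos 2). lra. Qed.

Lemma rho_gt1 : 1 < rho.
Proof. unfold rho. pose proof (sqrt_lt_R0 2). lra. Qed.

Lemma rho2 : rho^2 = 2*rho+1.
Proof. unfold rho. pose proof (sqrt_sqrt 2 ltac:(lra)). nra. Qed.

Lemma pi_low k j : (1 <= k)%nat -> (1 <= j <= 2^k-1)%nat -> pi (S k) j = pi k j.
Proof.
  intros Hk Hj. unfold pi. rewrite pow2S. pose proof (pow2_ge1 k).
  unfold inrange. rewrite (proj2 (Nat.leb_le 1 j)) by lia.
  rewrite (proj2 (Nat.leb_le j _)) by lia. rewrite (proj2 (Nat.leb_le j (2^k-1))) by lia. reflexivity.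
Qed.

Lemma pi_mid k : (1 <= k)%nat -> pi (S k) (2^k-1+1) = rho^(k-1) + 1.
Proof.
  intros Hk. unfold pi. rewrite pow2S. pose proof (pow2_ge1 k).
  unfold inrange. rewrite (proj2 (Nat.leb_le 1 _)) by lia.
  rewrite (proj2 (Nat.leb_le _ _)) by lia. simpl andb.
  unfold alpha. replace (2^k-1+1-1+1)%nat with (2^k)%nat by lia.
  rewrite nu_pow. replace (Z.of_nat k - 1)%Z with (Z.of_nat (k-1)) by lia.
  rewrite <- pow_powerRZ. reflexivity.
Qed.

Lemma pi_high k j : (1 <= k)%nat -> (2^k-1+2 <= j <= 2*(2^k-1)+1)%nat ->
  pi (S k) j = pi k (j - (2^k-1) - 1).
Proof.
  intros Hk Hj. unfold pi. rewrite pow2S. pose proof (pow2_ge1 k).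
  unfold inrange. rewrite (proj2 (Nat.leb_le 1 j)) by lia.
  rewrite (proj2 (Nat.leb_le j _)) by lia.
  rewrite (proj2 (Nat.leb_le 1 (j - (2^k-1) -1))) by lia.
  rewrite (proj2 (Nat.leb_le (j - (2^k-1) -1) _)) by lia. simpl andb.
  unfold alpha. replace (j-1+1)%nat with (2^k + (j - (2^k-1) - 1))%nat by lia.
  rewrite nu_shift by lia. replace (j - (2 ^ k - 1) - 1 - 1 + 1)%nat with (j - (2^k-1) - 1)%nat by lia.
  reflexivity.
Qed.

Lemma pi_pos k j : (1 <= j <= 2^k-1)%nat -> 0 < pi k j.
Proof.
  intros Hj. unfold pi, inrange. rewrite (proj2 (Nat.leb_le 1 j)) by lia.
  rewrite (proj2 (Nat.leb_le j _)) by lia. simpl andb. unfold alpha.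
  pose proof (powerRZ_lt rho (Z.of_nat (nu (j - 1 + 1)) - 1) rho_pos). lra.
Qed.

Lemma c_S k : (1 <= k)%nat -> c (S k) = c_step k (c k).
Proof. intros. destruct k; [lia|reflexivity]. Qed.
Lemma mubar_S k : (1 <= k)%nat -> mubar (S k) = mubar_step k (mubar k).
Proof. intros. destruct k; [lia|reflexivity]. Qed.

Lemma c_low k j : (1 <= k)%nat -> (1 <= j <= 2^k-1)%nat -> c (S k) j = pi k j.
Proof. intros Hk Hj. rewrite c_S by lia. unfold c_step. cbv zeta. bsimpl. reflexivity. Qed.

Lemma c_mid k : (1 <= k)%nat -> c (S k) (2^k-1+1) = (1 + / rho^k) * (rho^(k-1)+1).
Proof. intros Hk. pose proof (pow2_ge1 k). rewrite c_S by lia. unfold c_step. cbv zeta. bsimpl. reflexivity. Qed.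

Lemma c_high k j : (1 <= k)%nat -> (2^k-1+2 <= j <= 2*(2^k-1)+1)%nat ->
  c (S k) j = rho * c k (j - (2^k-1) - 1) - (rho - 1 - / rho^k) * pi k (j - (2^k-1) - 1).
Proof. intros Hk Hj. pose proof (pow2_ge1 k). rewrite c_S by lia. unfold c_step. cbv zeta. bsimpl. reflexivity. Qed.

Lemma key (x a b : R) : x <> 0 ->
  rho^2*((x-1)*(a-b)) + ((rho+1)*a - (1+/x)*b) = (rho*x-1)*((rho*a - (rho-1-/x)*b) - b).
Proof.
  intros Hx.
  replace (rho^2*((x-1)*(a-b)) + ((rho+1)*a - (1+/x)*b))
    with ((rho*x-1)*((rho*a - (rho-1-/x)*b) - b) + (rho^2-2*rho-1)*(b-a)) by (field; auto).
  rewrite rho2. ring.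
Qed.

Lemma main k' : let k := S k' in let n := (2^k-1)%nat in
  (forall j, (1 <= j <= n)%nat -> 0 <= c k j - pi k j) /\
  (forall j, (1 <= j < n)%nat -> mubar k n j = (rho^k - 1) * (c k j - pi k j)).
Proof.
  induction k' as [|k' IH]; intros k n.
  - subst k n. simpl. split; [|intros; lia].
    intros j Hj. assert (j = 1%nat) by lia. subst j. simpl.
    unfold pi, alpha. simpl. unfold nu. simpl.
    replace (powerRZ rho (0 - 1)) with (/ rho) by (simpl; field; apply Rgt_not_eq, rho_pos).
    assert (/ rho = rho - 2).
    { pose proof rho2. pose proof rho_pos. field_simplify_eq; [nra| lra]. }
    pose proof rho_gt1. rewrite Rmult_1_r. lra.
  - destruct IH as [IHc IHm].
    set (K := S k') in *.
    assert (HK : (1 <= K)%nat) by (subst K; lia).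
    set (m := (2^K - 1)%nat) in *.
    assert (Hm1 : (1 <= m)%nat) by (subst m; simpl; pose proof (pow2_ge1 k'); lia).
    assert (Hn : n = (2*m+1)%nat) by (subst n k m; apply pow2S).
    assert (Hx : rho ^ K <> 0) by (apply pow_nonzero; pose proof rho_pos; lra).
    assert (Hxp : 0 < rho ^ K) by (apply pow_lt, rho_pos).
    assert (Hyp : 0 < rho ^ (K-1)) by (apply pow_lt, rho_pos).
    assert (HkS : rho ^ k = rho * rho ^ K) by reflexivity.
    split.
    + intros j Hj. rewrite Hn in Hj.
      destruct (Nat.le_gt_cases j m).
      * subst k. rewrite c_low, pi_low by (subst m; lia). lra.
      * destruct (Nat.eq_dec j (m+1)).
        -- subst j k m. rewrite c_mid, pi_mid by lia.
           assert (0 < / rho ^ K) by (apply Rinv_0_lt_compat; auto). nra.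
        -- subst k m. rewrite c_high, pi_high by lia.
           set (j' := (j - (2 ^ K - 1) - 1)%nat).
           assert (0 <= c K j' - pi K j') by (apply IHc; subst j'; lia).
           assert (0 < pi K j') by (apply pi_pos; subst j'; lia).
           assert (0 < / rho ^ K) by (apply Rinv_0_lt_compat; auto).
           pose proof rho_pos.
           replace (rho * c K j' - (rho - 1 - / rho ^ K) * pi K j' - pi K j')
             with (rho * (c K j' - pi K j') + / rho ^ K * pi K j') by ring.
           nra.
    + intros j Hj. rewrite Hn in Hj |- *. subst k. rewrite mubar_S by lia.
      rewrite row_N by (subst m; auto).
      unfold inrange. rewrite (proj2 (Nat.leb_le 1 j)) by lia.
      rewrite (proj2 (Nat.leb_le j _)) by lia. simpl andb.
      destruct (Nat.leb_spec j m).
      * subst m. rewrite c_low, pi_low by lia. ring.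
      * destruct (Nat.eqb_spec j (m+1)).
        -- subst j m. rewrite c_mid, pi_mid by lia. rewrite HkS. field. exact Hx.
        -- subst m. rewrite c_high, pi_high by lia.
           rewrite IHm by lia. rewrite HkS. apply key; auto.
Qed.

Theorem lemma15 (k : nat) :
  let n := (2 ^ k - 1)%nat in
  forall j : nat, (1 <= j < n)%nat ->
    mubar k n j = (rho ^ k - 1) * (c k j - pi k j) /\
    mu (S k) (Row n) j = rho ^ (2 * k - 1) / (rho ^ (k - 1) + 1) * (c k j - pi k j) /\
    0 <= rho ^ (2 * k - 1) / (rho ^ (k - 1) + 1) * (c k j - pi k j).
Proof.
  intros n j Hj. destruct k as [|k']. { subst n; simpl in Hj; lia. }
  destruct (main k') as [Hc Hm]. cbv zeta in Hc, Hm.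
  assert (Hd : 0 <= c (S k') j - pi (S k') j) by (apply Hc; subst n; lia).
  assert (Hy : 0 < rho ^ k') by (apply pow_lt, rho_pos).
  pose proof rho_pos.
  replace (S k' - 1)%nat with k' by lia.
  replace (2 * S k' - 1)%nat with (S (k' + k')) by lia.
  replace (rho ^ S (k' + k')) with (rho * (rho ^ k' * rho ^ k')) by (rewrite <- tech_pow_Rmult, pow_add; reflexivity).
  split; [|split].
  - apply Hm. exact Hj.
  - unfold mu. rewrite mubar_S by lia. rewrite row_n by (subst n; auto; pose proof (pow2_ge1 k'); simpl; lia).
    rewrite Hm by exact Hj. replace (S k' - 1)%nat with k' by lia. simpl pow at 1 2.
    field. lra.
  - apply Rmult_le_pos; auto. apply Rmult_le_pos. 
    + pose proof (Rmult_lt_0_compat _ _ Hy Hy). nra.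
    + left. apply Rinv_0_lt_compat. lra.
Qed.
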